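(* Let $k\geq 1$, $m\neq 0$, and $K=J(2k+1,2m)$ with the knot group presentation $\langle a,b\mid w^m a=bw^m\rangle$, $w=(ba^{-1})^k ba(b^{-1}a)^k$. Let $\phi_K(x,y)$ be the Riley polynomial for this presentation, and put $\lambda=\lambda_k(x,y)=x^2-y-(y-2)(y+2-x^2)S_k(y)S_{k-1}(y)$ and $\alpha=\alpha_k(x,y)=1+(y+2-x^2)S_{k-1}(y)\big(S_k(y)-S_{k-1}(y)\big)$. Then if $m\geq 1$, $\phi_K(x,y)=S_{m-1}(\lambda)\,\alpha-S_{m-2}(\lambda)$; if $m\leq -1$, $\phi_K(x,y)=S_{|m|}(\lambda)-S_{|m|-1}(\lambda)\,\alpha$.
   Context: Chebyshev polynomials: $S_0(z)=1$, $S_1(z)=z$, $S_{n+1}(z)=zS_n(z)-S_{n-1}(z)$, with the convention $S_{-1}=0$. $J(2k+1,2m)$ is the double twist knot (two-bridge knot with twist regions of $2k+1$ and $2m$ signed half-twists) whose group has the stated presentation with $a,b$ meridians. Riley polynomial: for a presentation $\langle a,b\mid va=bv\rangle$ with $a,b$ meridians, set $A=\begin{bmatrix}s&1\\0&s^{-1}\end{bmatrix}$, $B=\begin{bmatrix}s&0\\2-y&s^{-1}\end{bmatrix}$, $V$ = $v$ evaluated at $A,B$; the $(1,2)$-entry of $VA-BV$ equals $f(s+s^{-1},y)$ for a polynomial $f\in\mathbb{Z}[x,y]$, and $\phi_K(x,y):=f(x,y)$ (here $v=w^m$). *)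

(* Defs.v *)
From HB Require Import structures.
From mathcomp Require Import all_boot all_order all_algebra.
Set Implicit Arguments. Unset Strict Implicit. Unset Printing Implicit Defensive.
Import Order.TTheory GRing.Theory Num.Theory.
Local Open Scope ring_scope.

(* cheb_ n z = S_{n-1}(z):  cheb_ 0 = S_{-1} = 0, cheb_ 1 = S_0 = 1,
   cheb_ (n+2) = z * cheb_ (n+1) - cheb_ n. *)
Fixpoint cheb_ {R : pzRingType} (n : nat) (z : R) : R :=
  match n with
  | 0%N => 0
  | 1%N => 1
  | (n'.+1 as n1).+1 => z * cheb_ n1 z - cheb_ n' z
  end.

(* Chebyshev polynomial S_n for an integer index n, extended by the recursion
   S_{n+1} = z S_n - S_{n-1} to all n (so S_{-1} = 0, S_{-n} = - S_{n-2}). *)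
Definition cheb {R : pzRingType} (n : int) (z : R) : R :=
  match n with
  | Posz n => cheb_ n.+1 z
  | Negz n => - cheb_ n z
  end.

Definition mx2 {R : pzRingType} (a b c d : R) : 'M[R]_2 :=
  \matrix_(i < 2, j < 2)
    if (i : nat) == 0%N then (if (j : nat) == 0%N then a else b)
    else (if (j : nat) == 0%N then c else d).

Section Riley.
Variable R : comUnitRingType.

Definition rileyA (s : R) : 'M[R]_2 := mx2 s 1 0 s^-1.
Definition rileyB (s y : R) : 'M[R]_2 := mx2 s 0 (2 - y) s^-1.

Definition rileyW (k : nat) (s y : R) : 'M[R]_2 :=
  let A := rileyA s in let B := rileyB s y in
  ((B * A^-1) ^+ k) * B * A * ((B^-1 * A) ^+ k).

(* The (1,2)-entry of V A - B V with V = w^m ; by definition of the Riley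
   polynomial this equals phi_K(s + s^{-1}, y). *)
Definition riley_entry (k : nat) (m : int) (s y : R) : R :=
  let A := rileyA s in let B := rileyB s y in
  let V := rileyW k s y ^ m in
  (V * A - B * V) ord0 ord_max.

Definition lambdak (k : nat) (x y : R) : R :=
  x ^+ 2 - y - (y - 2) * (y + 2 - x ^+ 2) * cheb k y * cheb (k%:Z - 1) y.

Definition alphak (k : nat) (x y : R) : R :=
  1 + (y + 2 - x ^+ 2) * cheb (k%:Z - 1) y * (cheb k y - cheb (k%:Z - 1) y).

End Riley.

(* Main.v *)
Require Import Defs.
From HB Require Import structures.
From mathcomp Require Import all_boot all_order all_algebra.
From mathcomp Require Import ring.
Import Order.TTheory GRing.Theory Num.Theory.
Local Open Scope ring_scope.

Section M.
Variable R : comUnitRingType.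
Implicit Types a b c d e f g h : R.

Lemma mx2_mul a b c d e f g h :
  mx2 a b c d * mx2 e f g h = mx2 (a*e + b*g) (a*f + b*h) (c*e + d*g) (c*f+d*h) :> 'M[R]_2.
Proof.
apply/matrixP => i j; rewrite -mulmxE !mxE !big_ord_recl big_ord0 !mxE.
by case: i => [[|[|i]] Hi]; case: j => [[|[|j]] Hj]; rewrite /= ?addr0.
Qed.

Lemma mx2_add a b c d e f g h :
  mx2 a b c d + mx2 e f g h = mx2 (a+e) (b+f) (c+g) (d+h) :> 'M[R]_2.
Proof.
apply/matrixP => i j; rewrite !mxE.
by case: i => [[|[|i]] Hi]; case: j => [[|[|j]] Hj]; rewrite /= ?addr0.
Qed.

Lemma mx2_opp a b c d : - mx2 a b c d = mx2 (-a) (-b) (-c) (-d) :> 'M[R]_2.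
Proof.
apply/matrixP => i j; rewrite !mxE.
by case: i => [[|[|i]] Hi]; case: j => [[|[|j]] Hj]; rewrite /= ?addr0.
Qed.

Lemma mx2_sub a b c d e f g h :
  mx2 a b c d - mx2 e f g h = mx2 (a-e) (b-f) (c-g) (d-h) :> 'M[R]_2.
Proof. by rewrite mx2_opp mx2_add. Qed.

Lemma mx2_scale e a b c d : e *: mx2 a b c d = mx2 (e*a) (e*b) (e*c) (e*d) :> 'M[R]_2.
Proof.
apply/matrixP => i j; rewrite !mxE.
by case: i => [[|[|i]] Hi]; case: j => [[|[|j]] Hj]; rewrite /= ?addr0.
Qed.

Lemma mx2_one : 1 = mx2 1 0 0 1 :> 'M[R]_2.
Proof.
apply/matrixP => i j; rewrite !mxE.
by case: i => [[|[|i]] Hi]; case: j => [[|[|j]] Hj]; rewrite /= ?addr0.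
Qed.

Lemma mx2_01 a b c d : mx2 a b c d ord0 ord_max = b :> R.
Proof. by rewrite mxE. Qed.

Lemma mx2_congr a b c d e f g h : a = e -> b = f -> c = g -> d = h ->
  mx2 a b c d = mx2 e f g h :> 'M[R]_2.
Proof. by move=> -> -> -> ->. Qed.

Lemma ch2 a b c d : a*d - b*c = 1 ->
  mx2 a b c d * mx2 a b c d = (a+d) *: mx2 a b c d - 1 :> 'M[R]_2.
Proof.
move=> H; rewrite mx2_mul mx2_scale mx2_one mx2_sub; apply: mx2_congr.
- by rewrite -H; ring.
- ring.
- ring.
- by rewrite -H; ring.
Qed.
End M.

Lemma inv_eq (T : unitRingType) (x y : T) : y * x = 1 -> x * y = 1 -> x^-1 = y.
Proof.
move=> H1 H2; have ux : x \is a GRing.unit by apply/unitrP; exists y.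
by rewrite -[LHS]mulr1 -H2 mulrA mulVr // mul1r.
Qed.

Section K.
Variable R : comUnitRingType.

Lemma mx2_inv (a b c d : R) : a*d - b*c = 1 -> (mx2 a b c d)^-1 = mx2 d (-b) (-c) a.
Proof.
move=> H; apply: inv_eq; rewrite mx2_mul mx2_one; apply: mx2_congr;
  by rewrite -?H; ring.
Qed.

Lemma ch2' (a b c d tau : R) : a*d - b*c = 1 -> a + d = tau ->
  mx2 a b c d * mx2 a b c d = tau *: mx2 a b c d - 1.
Proof. by move=> H <-; apply: ch2. Qed.

Lemma powpos (M : 'M[R]_2) tau : M * M = tau *: M - 1 -> forall n,
  M ^+ n.+1 = cheb_ n.+1 tau *: M - cheb_ n tau *: 1.
Proof.
move=> HM; elim=> [|n IH]; first by rewrite expr1 scale1r scale0r subr0.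
rewrite exprS IH mulrBr -!scalerAr mulr1 HM.
have -> : cheb_ n.+2 tau = tau * cheb_ n.+1 tau - cheb_ n tau by [].
by rewrite scalerBr scalerA scalerBl mulrC addrAC.
Qed.

Lemma cassini n (z : R) :
  cheb_ n.+1 z ^+ 2 - z * cheb_ n.+1 z * cheb_ n z + cheb_ n z ^+ 2 = 1.
Proof.
elim: n => [|n IH]; first by rewrite /=; ring.
have -> : cheb_ n.+2 z = z * cheb_ n.+1 z - cheb_ n z by [].
by rewrite -[RHS]IH; ring.
Qed.

Lemma cert1 (q : R) {s t x y : R} : x - y = q * (s*t - 1) -> s*t = 1 -> x = y.
Proof. by move=> H H1; apply/eqP; rewrite -subr_eq0 H H1 subrr mulr0. Qed.

Lemma cert2 (q1 q2 : R) {s t u v y x z : R} :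
  x - z = q1 * (s*t - 1) + q2 * (u^+2 - y*u*v + v^+2 - 1) ->
  s*t = 1 -> u^+2 - y*u*v + v^+2 = 1 -> x = z.
Proof. by move=> H H1 H2; apply/eqP; rewrite -subr_eq0 H H1 H2 !subrr !mulr0 addr0. Qed.

Lemma key (k : nat) (s y : R) : (1 <= k)%N -> s \is a GRing.unit ->
  exists a b c d, rileyW k s y = mx2 a b c d /\ a*d - b*c = 1 /\
    a + d = lambdak k (s + s^-1) y /\
    (mx2 a b c d * rileyA s - rileyB s y * mx2 a b c d) ord0 ord_max
      = alphak k (s + s^-1) y.
Proof.
case: k => [//|j] _ us.
set t := s^-1.
have hst : s * t = 1 by rewrite mulrV.
have hA : rileyA s = mx2 s 1 0 t by [].
have hB : rileyB s y = mx2 s 0 (2 - y) t by [].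
have hAi : (rileyA s)^-1 = mx2 t (-1) (-0) s.
  by rewrite hA mx2_inv // mulr0 subr0.
have hBi : (rileyB s y)^-1 = mx2 t (-0) (-(2-y)) s.
  by rewrite hB mx2_inv // mul0r subr0.
have HP : rileyB s y * (rileyA s)^-1 * (rileyB s y * (rileyA s)^-1)
   = y *: (rileyB s y * (rileyA s)^-1) - 1.
  rewrite hAi hB mx2_mul; apply: ch2'.
  - by apply: (cert1 (s*t+1) _ hst); ring.
  - by apply: (cert1 (2%:R) _ hst); ring.
have HQ : (rileyB s y)^-1 * rileyA s * ((rileyB s y)^-1 * rileyA s)
   = y *: ((rileyB s y)^-1 * rileyA s) - 1.
  rewrite hBi hA mx2_mul; apply: ch2'.
  - by apply: (cert1 (s*t+1) _ hst); ring.
  - by apply: (cert1 (2%:R) _ hst); ring.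
rewrite /rileyW (powpos _ _ HP) (powpos _ _ HQ) hAi hBi hA hB.
rewrite !mx2_mul mx2_one !mx2_scale !mx2_sub !mx2_mul.
have hk1 : (j.+1)%:Z - 1 = j%:Z by rewrite -addn1 PoszD addrK.
set u := cheb_ j.+1 y; set v := cheb_ j y.
have hcas : u^+2 - y*u*v + v^+2 = 1 := cassini j y.
have hl : lambdak j.+1 (s + t) y =
   (s+t)^+2 - y - (y - 2) * (y + 2 - (s+t)^+2) * (y * u - v) * u.
  by rewrite /lambdak hk1.
have hal : alphak j.+1 (s + t) y =
   1 + (y + 2 - (s+t)^+2) * u * ((y * u - v) - u).
  by rewrite /alphak hk1.
rewrite hl hal.
do 4 eexists; split; first reflexivity.
split; last split.
- by apply: (cert2 ((1)%:R*v^+4 + (2)%:R*u^+2*v^+2 + (1)%:R*u^+4 - (2)%:R*y*u*v^+3 - (2)%:R*y*u^+3*v + (1)%:R*y^+2*u^+2*v^+2 + (1)%:R*s*t*v^+4 + (2)%:R*s*t*u^+2*v^+2 + (1)%:R*s*t*u^+4 - (2)%:R*s*t*y*u*v^+3 - (2)%:R*s*t*y*u^+3*v + (1)%:R*s*t*y^+2*u^+2*v^+2 - (4)%:R*s^+2*t^+2*u*v^+3 - (2)%:R*s^+2*t^+2*u^+2*v^+2 + (1)%:R*s^+2*t^+2*u^+4 + (4)%:R*s^+2*t^+2*y*u^+2*v^+2 - (2)%:R*s^+2*t^+2*y*u^+3*v + (6)%:R*s^+3*t^+3*u^+2*v^+2 + (1)%:R*s^+3*t^+3*u^+4 - (2)%:R*s^+3*t^+3*y*u^+3*v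 - (4)%:R*s^+4*t^+4*u^+3*v + (1)%:R*s^+4*t^+4*u^+4 + (1)%:R*s^+5*t^+5*u^+4) ((1)%:R*1 + (1)%:R*v^+2 + (1)%:R*u^+2 - (1)%:R*y*u*v) _ hst hcas); ring.
- by apply: (cert2 (-(2)%:R*1 - (12)%:R*u*v - (6)%:R*u^+2 + (6)%:R*y*u*v + (15)%:R*y*u^+2 - (6)%:R*y^+2*u^+2 - (2)%:R*t^+2*u*v - (3)%:R*t^+2*u^+2 + (2)%:R*t^+2*y*u^+2 + (10)%:R*s*t*u^+2 - (5)%:R*s*t*y*u^+2 + (1)%:R*s*t^+3*u^+2 - (2)%:R*s^+2*u*v - (3)%:R*s^+2*u^+2 + (2)%:R*s^+2*y*u^+2 + (1)%:R*s^+3*t*u^+2) ((2)%:R*1 - (1)%:R*y + (1)%:R*t^+2 + (1)%:R*s^+2) _ hst hcas); ring.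
- rewrite !mx2_mul !mx2_sub mx2_01. by apply: (cert2 ((1)%:R*v^+2 - (2)%:R*u*v - (1)%:R*u^+2 - (2)%:R*y*u*v + (1)%:R*y*u^+2 + (1)%:R*y^+2*u^+2 + (1)%:R*t^+2*u*v + (1)%:R*t^+2*u^+2 - (1)%:R*t^+2*y*u^+2 - (4)%:R*s*t*u*v - (3)%:R*s*t*u^+2 + (3)%:R*s*t*y*u^+2 - (1)%:R*s*t^+3*u^+2 + (1)%:R*s^+2*u*v + (1)%:R*s^+2*u^+2 - (1)%:R*s^+2*y*u^+2 + (3)%:R*s^+2*t^+2*u^+2 - (1)%:R*s^+3*t*u^+2) ((1)%:R*1) _ hst hcas); ring.
Qed.
End K.

Arguments powpos {R M tau}.
Arguments ch2' {R a b c d tau}.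
Arguments mx2_inv {R a b c d}.

Lemma entry_lin (R : comUnitRingType) (M A B : 'M[R]_2) (c1 c0 : R) i j :
  ((c1 *: M + c0 *: 1) * A - B * (c1 *: M + c0 *: 1)) i j
  = c1 * (M*A - B*M) i j + c0 * (A - B) i j.
Proof.
rewrite mulrDl mulrDr -!scalerAl -!scalerAr mul1r mulr1.
rewrite !mxE; ring.
Qed.

Lemma intS n : (Posz n.+1 - 1 = Posz n)%R.
Proof. by rewrite -addn1 PoszD addrK. Qed.
Lemma intSS n : (Posz n.+2 - 2 = Posz n)%R.
Proof. by rewrite -addn2 PoszD addrK. Qed.

Lemma chebm1 (R : comUnitRingType) n (z : R) : cheb (Posz n.+1 - 1) z = cheb_ n.+1 z.
Proof. by rewrite intS. Qed.

Lemma chebm2 (R : comUnitRingType) n (z : R) : cheb (Posz n.+1 - 2) z = cheb_ n z.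
Proof.
case: n => [|n]; first by rewrite /= oppr0.
by rewrite intSS.
Qed.

Theorem proposition4p4 (R : comUnitRingType) (k : nat) (m : int)
  (s y : R) :
  (1 <= k)%N -> m != 0 -> s \is a GRing.unit ->
  let x := s + s^-1 in
  let lam := lambdak k x y in
  let alp := alphak k x y in
  (0 < m -> riley_entry k m s y = cheb (m - 1) lam * alp - cheb (m - 2) lam) /\
  (m < 0 -> riley_entry k m s y = cheb (- m) lam - cheb (- m - 1) lam * alp).
Proof.
move=> hk hm us x lam alp; rewrite {}/alp {}/lam {}/x.
have [a [b [c [d [HW [Hdet [Htr HE]]]]]]] := @key R k s y hk us.
have HWW := ch2' Hdet Htr.
have hAB : (rileyA s - rileyB s y) ord0 ord_max = 1.
  by rewrite /rileyA /rileyB mx2_sub mx2_01 subr0.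
rewrite /riley_entry HW.
case: m hm => [[|n]|n] // _; split => // _.
- rewrite -exprnP (powpos HWW n) -scaleNr entry_lin HE hAB chebm1 chebm2.
  ring.
- have -> : mx2 a b c d ^ Negz n = (mx2 a b c d)^-1 ^+ n.+1 by rewrite exprVn.
  have Hdet' : d * a - (-b) * (-c) = 1 by rewrite -Hdet; ring.
  have Htr' : d + a = lambdak k (s + s^-1) y by rewrite addrC.
  have HWi := ch2' Hdet' Htr'.
  have HEi : (mx2 d (-b) (-c) a * rileyA s - rileyB s y * mx2 d (-b) (-c) a)
      ord0 ord_max = lambdak k (s + s^-1) y - alphak k (s + s^-1) y.
    rewrite -HE -Htr /rileyA /rileyB !mx2_mul !mx2_sub !mx2_01; ring.
  rewrite (mx2_inv Hdet) (powpos HWi n) -scaleNr entry_lin HEi hAB.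
  rewrite NegzE opprK intS.
  have -> : cheb (Posz n.+1) (lambdak k (s + s^-1) y)
    = lambdak k (s + s^-1) y * cheb_ n.+1 (lambdak k (s + s^-1) y)
      - cheb_ n (lambdak k (s + s^-1) y) by [].
  have -> : cheb (Posz n) (lambdak k (s + s^-1) y)
    = cheb_ n.+1 (lambdak k (s + s^-1) y) by [].
  ring.
Qed.
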